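(* Let $\Gamma$ be a bipartite graph and let $f:\Gamma\to\Gamma$ be a graph map that preserves the bipartite structure and maps each edge to an edge path of length at least $1$. Then the split map $S(f):S(\Gamma)\to S(\Gamma)$ is a traintrack map.
   Context: A graph map sends vertices to vertices and each edge to an edge path (backtracking allowed). Let $\Gamma$ have vertex parts $V_0,V_1$ and edges $x_1,x_2,\dots$ each oriented from its $V_0$-endpoint to its $V_1$-endpoint; preserving the bipartite structure means $f(V_0)\subset V_0$, $f(V_1)\subset V_1$, so each $f(x_i)$ has odd number of edges $\|f(x_i)\|$. Prototype maps on $P_7$ (vertices $v_0,v_1$, edges $a,\dots,g$ oriented $v_0\to v_1$, uppercase = reversed): $\phi_1=\mathrm{id}$ and, for $m\ge0$, $\phi_{3+2m}$: $a\mapsto aG(aB)^ma$, $b\mapsto bD(bC)^mb$, $c\mapsto cF(cA)^mc$, $d\mapsto aB(aB)^ma$, $e\mapsto cB(aB)^ma$, $f\mapsto aC(aB)^ma$, $g\mapsto bE(bA)^mb$. The split graph $S(\Gamma)$ replaces each edge $x_i$ by seven parallel edges $a_i,\dots,g_i$ with the same endpoints and orientation. The split map $S(f)$ sends $y_i$ ($y\in\{a,\dots,g\}$) to the path obtained from the word $\phi_{\|f(x_i)\|}(y)$ by giving its $t$-th letter the subscript of the $t$-th edge of $f(x_i)$. Traintrack map: a direction at a vertex is an oriented edge germ leaving it; a turn is an unordered pair of directions at a vertex; a traintrack structure is a partition of turns into legal and illegal ones with every backtracking turn (a direction paired with itself) illegal; a path is legal if it is locally injective and makes only legal turns. A graph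 map $h$ is taut if it is a local embedding on the interior of each edge, and it is a traintrack map if it is taut and there is a traintrack structure such that $h$ sends legal turns to legal turns and every edge to a legal path. *)

(* Defs.v *)
From mathcomp Require Import all_boot.
Set Implicit Arguments. Unset Strict Implicit. Unset Printing Implicit Defensive.

(* An oriented edge (edge germ / letter) is a pair (e, b) : E * bool, where
   b = false means e traversed along its orientation, b = true means
   e traversed backwards (the "uppercase" letter). *)

Section Graphs.
Variables (V E : Type) (o t : E -> V).

Definition dedge := (E * bool)%type.
Definition dsrc (d : dedge) : V := if d.2 then t d.1 else o d.1.
Definition dtgt (d : dedge) : V := if d.2 then o d.1 else t d.1.
Definition drev (d : dedge) : dedge := (d.1, ~~ d.2).

Fixpoint chain (p : seq dedge) : Prop :=
  match p with
  | d1 :: ((d2 :: _) as p') => dtgt d1 = dsrc d2 /\ chain p'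
  | _ => True
  end.

Definition path_from (v w : V) (p : seq dedge) : Prop :=
  match p with
  | [::] => False
  | d :: q => dsrc d = v /\ dtgt (last d q) = w /\ chain p
  end.

Definition graph_map (hV : V -> V) (hE : E -> seq dedge) : Prop :=
  forall e, path_from (hV (o e)) (hV (t e)) (hE e).

Definition dimage (hE : E -> seq dedge) (d : dedge) : seq dedge :=
  if d.2 then rev (map drev (hE d.1)) else hE d.1.

Definition Dmap (hE : E -> seq dedge) (d : dedge) : dedge :=
  match dimage hE d with [::] => d | d' :: _ => d' end.

(* the turns taken by a path: at the junction of consecutive d1, d2
   the path makes the turn {drev d1, d2} at the vertex dtgt d1 = dsrc d2 *)
Fixpoint all_turns (P : dedge -> dedge -> Prop) (p : seq dedge) : Prop :=
  match p with
  | d1 :: ((d2 :: _) as p') => P (drev d1) d2 /\ all_turns P p'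
  | _ => True
  end.

Definition locally_injective (p : seq dedge) : Prop :=
  all_turns (fun d1 d2 => d1 <> d2) p.

Definition taut (hE : E -> seq dedge) : Prop :=
  forall e, locally_injective (hE e).

Definition traintrack_structure (legal : dedge -> dedge -> Prop) : Prop :=
  [/\ forall d1 d2, legal d1 d2 -> dsrc d1 = dsrc d2,
      forall d1 d2, legal d1 d2 -> legal d2 d1
    & forall d, ~ legal d d].

Definition legal_path (legal : dedge -> dedge -> Prop) (p : seq dedge) : Prop :=
  locally_injective p /\ all_turns legal p.

Definition traintrack_map (hV : V -> V) (hE : E -> seq dedge) : Prop :=
  [/\ graph_map hV hE, taut hE &
    exists legal : dedge -> dedge -> Prop,
      [/\ traintrack_structure legal,
          forall d1 d2, dsrc d1 = dsrc d2 -> legal d1 d2 ->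
                        legal (Dmap hE d1) (Dmap hE d2)
        & forall e, legal_path legal (hE e)]].

End Graphs.

(* part v = false : v in V_0 ; part v = true : v in V_1.
   Every edge is oriented from its V_0-endpoint to its V_1-endpoint. *)
Definition bipartite (V E : Type) (o t : E -> V) (part : V -> bool) : Prop :=
  forall e, part (o e) = false /\ part (t e) = true.

Inductive letter := La | Lb | Lc | Ld | Le | Lf | Lg.

Definition fw (x : letter) : letter * bool := (x, false).
Definition bw (x : letter) : letter * bool := (x, true).
Definition rep {T} (m : nat) (u : seq T) : seq T := flatten (nseq m u).

(* phi_1 = id ; phi_{3+2m} as in the paper (values for even n are
   irrelevant: they never occur) *)
Definition phi (n : nat) (y : letter) : seq (letter * bool) :=
  if n <= 1 then [:: fw y] else
  let m := (n - 3)./2 in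
  match y with
  | La => [:: fw La; bw Lg] ++ rep m [:: fw La; bw Lb] ++ [:: fw La]
  | Lb => [:: fw Lb; bw Ld] ++ rep m [:: fw Lb; bw Lc] ++ [:: fw Lb]
  | Lc => [:: fw Lc; bw Lf] ++ rep m [:: fw Lc; bw La] ++ [:: fw Lc]
  | Ld => [:: fw La; bw Lb] ++ rep m [:: fw La; bw Lb] ++ [:: fw La]
  | Le => [:: fw Lc; bw Lb] ++ rep m [:: fw La; bw Lb] ++ [:: fw La]
  | Lf => [:: fw La; bw Lc] ++ rep m [:: fw La; bw Lb] ++ [:: fw La]
  | Lg => [:: fw Lb; bw Le] ++ rep m [:: fw Lb; bw La] ++ [:: fw Lb]
  end.

Definition split_o (V E : Type) (o : E -> V) (x : E * letter) : V := o x.1.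
Definition split_t (V E : Type) (t : E -> V) (x : E * letter) : V := t x.1.

(* S(f)(y_i): the word phi_{||f(x_i)||}(y), whose t-th letter gets the
   subscript of (the edge underlying) the t-th oriented edge of f(x_i) *)
Definition split_mapE (E : Type) (fE : E -> seq (E * bool)) (x : E * letter)
  : seq ((E * letter) * bool) :=
  let p := fE x.1 in
  [seq ((pw.1.1, pw.2.1), pw.2.2) | pw <- zip p (phi (size p) x.2)].

(* Main.v *)
Require Import Defs.
From mathcomp Require Import all_boot.
From mathcomp Require Import zify.
Set Implicit Arguments. Unset Strict Implicit. Unset Printing Implicit Defensive.

Definition T0 (x y : letter) : bool :=
  match x, y with
  | La, Lg | La, Lb | Lb, Ld | Lb, Lc | Lc, Lf | La, Lc | Lb, Le => true
  | _, _ => false end.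
Definition TT x y := T0 x y || T0 y x.

Lemma TT_sym x y : TT x y = TT y x. Proof. by rewrite /TT orbC. Qed.
Lemma TT_irr x : ~~ TT x x. Proof. by case: x. Qed.

Definition firstL (s : bool) (y : letter) : letter :=
  if s then y else match y with La => La | Lb => Lb | Lc => Lc | Ld => La
                   | Le => Lc | Lf => La | Lg => Lb end.
Definition lastL (s : bool) (y : letter) : letter :=
  if s then y else match y with La => La | Lb => Lb | Lc => Lc | Ld => La
                   | Le => La | Lf => La | Lg => Lb end.

Lemma TT_first s1 s2 y1 y2 : TT y1 y2 -> TT (firstL s1 y1) (firstL s2 y2).
Proof. by case: s1; case: s2; case: y1; case: y2. Qed.
Lemma TT_last s1 s2 y1 y2 : TT y1 y2 -> TT (lastL s1 y1) (lastL s2 y2).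
Proof. by case: s1; case: s2; case: y1; case: y2. Qed.

Lemma rep_S (A : Type) m (u : seq A) : rep m.+1 u = u ++ rep m u. Proof. by []. Qed.
Lemma size_rep (A : Type) m (u : seq A) : size (rep m u) = m * size u.
Proof. by elim: m => [//|m IH]; rewrite rep_S size_cat IH mulSn. Qed.

Lemma head_phi n y x0 : head x0 (phi n y) = fw (firstL (n <= 1) y).
Proof. rewrite /phi /firstL; case: (n <= 1) => //; by case: y. Qed.
Lemma last_phi n y x0 : last x0 (phi n y) = fw (lastL (n <= 1) y).
Proof. rewrite /phi /lastL; case: (n <= 1) => //; by case: y; rewrite /= !last_cat. Qed.

Definition Rl (d1 d2 : letter * bool) := TT d1.1 d2.1.

Lemma rep_head (u v : letter*bool) m : exists s, rep m [:: u; v] ++ [:: u] = u :: s.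
Proof. by case: m => [|m]; [exists [::] | exists (v :: rep m [:: u; v] ++ [:: u])]. Qed.

Lemma turns_rep (u v : letter*bool) m : TT u.1 v.1 -> all_turns Rl (rep m [:: u; v] ++ [:: u]).
Proof.
move=> h; elim: m => [//|m IH] /=.
have [s Hs] := rep_head u v m; rewrite Hs in IH *.
split; first done. split; last done. by rewrite /Rl TT_sym.
Qed.

Lemma turns_phi_gen x z u v m : TT x.1 z.1 -> TT z.1 u.1 -> TT u.1 v.1 ->
  all_turns Rl (x :: z :: rep m [:: u; v] ++ [:: u]).
Proof.
move=> h1 h2 h3; have := turns_rep m h3.
have [s Hs] := rep_head u v m; rewrite Hs /= => H.
by split; [|split].
Qed.

Lemma phi_turns n y : all_turns Rl (phi n y).
Proof.
rewrite /phi; case: (n <= 1) => //.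
by case: y; apply: turns_phi_gen.
Qed.

Fixpoint altb {A : Type} (b : bool) (s : seq (A * bool)) : bool :=
  match s with [::] => true | x :: s' => (x.2 == b) && altb (~~ b) s' end.

Lemma rep_alt (u v : letter * bool) m s : u.2 = false -> v.2 = true ->
  altb false (rep m [:: u; v] ++ s) = altb false s.
Proof. move=> hu hv; elim: m => [//|m IH] /=. by rewrite hu hv IH. Qed.

Lemma phi_props n y : odd n -> size (phi n y) = n /\ altb false (phi n y).
Proof.
move=> on.
have {on} [k ->] : exists k, n = k.*2.+1.
  by exists n./2; rewrite -[n in n = _]odd_double_half on.
case: k => [|k]; first by [].
rewrite /phi.
have -> : (k.+1.*2.+1 - 3)./2 = k by rewrite doubleS !subSS subn0 doubleK.
rewrite doubleS /=.
case: y; (split; [rewrite /= size_cat size_rep /=; lia | by rewrite /= rep_alt]).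
Qed.

Lemma altb_eq (A B : Type) b (s1 : seq (A*bool)) (s2 : seq (B*bool)) :
  altb b s1 -> altb b s2 -> size s1 = size s2 -> map snd s1 = map snd s2.
Proof.
elim: s1 b s2 => [|a s1 IH] b [|c s2] //= /andP[/eqP -> h1] /andP[/eqP -> h2] [hs].
by rewrite (IH _ _ h1 h2 hs).
Qed.

Definition img {E : Type} (p : seq (E*bool)) (w : seq (letter*bool)) : seq ((E*letter)*bool) :=
  [seq ((pw.1.1, pw.2.1), pw.2.2) | pw <- zip p w].
Definition proj {E : Type} (d : (E*letter)*bool) : E*bool := (d.1.1, d.2).

Lemma map_proj_img (E : Type) (p : seq (E*bool)) w : map snd p = map snd w -> map proj (img p w) = p.
Proof.
elim: p w => [|a p IH] [|c w] //= [h1 h2].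
by rewrite /proj /= -h1 IH //; case: a {h1}.
Qed.

Lemma last_img (E : Type) (p : seq (E*bool)) w a c x0 : size p = size w ->
  last x0 (img (a::p) (c::w)) = (((last a p).1, (last c w).1), (last c w).2).
Proof.
elim: p w a c => [|a' p IH] [|c' w] a c //= [hs].
by have := IH w a' c' hs.
Qed.

Lemma last_img' (E : Type) (p : seq (E*bool)) w a c : size p = size w ->
  last ((a.1, c.1), c.2) (img p w) = (((last a p).1, (last c w).1), (last c w).2).
Proof. exact: (@last_img E p w a c (a.1, c.1, c.2)). Qed.

Lemma all_turns_and (A : Type) (P Q R : A*bool -> A*bool -> Prop) s :
  (forall a b, P a b -> Q a b -> R a b) -> all_turns P s -> all_turns Q s -> all_turns R s.
Proof.
move=> h; elim: s => [//|d s IH]; case: s IH => [//|d' s] IH /= [h1 h2] [h3 h4].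
split; [exact: h | exact: IH].
Qed.

Lemma img_turns (E : Type) (P : (E*letter)*bool -> (E*letter)*bool -> Prop) (R : letter*bool -> letter*bool -> Prop) :
  (forall e1 e2 d1 d2, R (drev d1) d2 -> P (drev ((e1,d1.1),d1.2)) ((e2,d2.1),d2.2)) ->
  forall p w, all_turns R w -> all_turns P (img p w).
Proof.
move=> h; elim=> [|a p IH] [|c w] //=.
case: p IH => [|a' p] IH; case: w => [|c' w] //= [h1 h2].
split; first exact: h.
exact: (IH (c' :: w)).
Qed.

Section G.
Variables (V E : Type) (o t : E -> V).

Lemma dsrc_drev (d : E*bool) : dsrc o t (drev d) = dtgt o t d.
Proof. by case: d => e []. Qed.

Lemma chain_turns s : chain o t s -> all_turns (fun a b => dsrc o t a = dsrc o t b) s.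
Proof.
elim: s => [//|d s IH]; case: s IH => [//|d' s] IH /= [h1 h2].
by split; [rewrite dsrc_drev | exact: IH].
Qed.

Lemma chain_split (s : seq ((E*letter)*bool)) :
  chain o t (map proj s) -> chain (split_o o) (split_t t) s.
Proof.
elim: s => [//|d s IH]; case: s IH => [//|d' s] IH /= [h1 h2].
by split; [exact: h1 | exact: IH].
Qed.

Lemma path_split (v w : V) (s : seq ((E*letter)*bool)) :
  path_from o t v w (map proj s) -> path_from (split_o o) (split_t t) v w s.
Proof.
case: s => [//|d s] /= [h1 [h2 h3]]; split; first exact: h1.
split; last by apply: (@chain_split (d :: s)); exact: h3.
by rewrite last_map in h2.
Qed.

Lemma Dmap_eq (A : Type) (h : A -> seq (A*bool)) (d : A*bool) : 0 < size (h d.1) ->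
  Dmap h d = if d.2 then drev (last d (h d.1)) else head d (h d.1).
Proof.
rewrite /Dmap /dimage; case: d.2.
- by case/lastP: (h d.1) => [//|s z] _; rewrite map_rcons rev_rcons /= last_rcons.
- by case: (h d.1).
Qed.

End G.

Section M.
Variables (V E : Type) (o t : E -> V) (part : V -> bool) (fV : V -> V) (fE : E -> seq (E * bool)).
Hypotheses (hb : bipartite o t part) (hg : graph_map o t fV fE) (hpt : forall v, part (fV v) = part v).

Lemma part_dsrc (d : E*bool) : part (dsrc o t d) = d.2.
Proof. by case: d => e [] /=; case: (hb e). Qed.
Lemma part_dtgt (d : E*bool) : part (dtgt o t d) = ~~ d.2.
Proof. by case: d => e [] /=; case: (hb e). Qed.

Lemma chain_alt d q : chain o t (d::q) -> altb d.2 (d::q) /\ (last d q).2 = odd (size q) (+) d.2.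
Proof.
elim: q d => [|d' q IH] d /=; first by rewrite eqxx.
move=> [h1 h2]; have [IH1 IH2] := IH d' h2.
have e2 : d'.2 = ~~ d.2 by rewrite -part_dsrc -h1 part_dtgt.
split; first by rewrite eqxx /= -e2.
by rewrite IH2 e2 addbN negb_add.
Qed.

Lemma key x y : map snd (fE x) = map snd (phi (size (fE x)) y).
Proof.
have := hg x; case E0: (fE x) => [//|d q] [h1 [h2 h3]].
have [A1 A2] := chain_alt h3.
have d2 : d.2 = false by rewrite -part_dsrc h1 hpt (proj1 (hb x)).
have l2 : (last d q).2 = false.
  by apply/negbTE; rewrite -part_dtgt h2 hpt (proj2 (hb x)).
have on : odd (size (d :: q)).
  by move: A2; rewrite l2 d2 addbF /= => <-.
have [P1 P2] := phi_props y on.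
apply: (@altb_eq _ _ false); [by rewrite d2 in A1 | exact: P2 | by rewrite P1].

Qed.

Lemma split_mapE_eq x : split_mapE fE x = img (fE x.1) (phi (size (fE x.1)) x.2).
Proof. by []. Qed.

Lemma Dmap_split d :
  dsrc (split_o o) (split_t t) (Dmap (split_mapE fE) d) = fV (dsrc (split_o o) (split_t t) d) /\
  (Dmap (split_mapE fE) d).1.2 = (if d.2 then lastL else firstL) (size (fE d.1.1) <= 1) d.1.2.
Proof.
case: d => [[x y] b] /=.
have K := key x y; have G := hg x.
have HF := head_phi (size (fE x)) y (fw y).
have HL := last_phi (size (fE x)) y (fw y).
have ne : 0 < size (fE x) by case: (fE x) G.
rewrite Dmap_eq split_mapE_eq /=; last first.
  rewrite /img size_map size_zip.
  have := congr1 size K; rewrite !size_map => <-; by rewrite minnn.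
move: K HF HL G ne; case: (fE x) => [//|a p].
case: (phi (size (a :: p)) y) => [//|c w] /= [e1 e2] HF HL [h1 [h2 h3]] _.
case: b.
- have E2 : (last c w).2 = (last a p).2 by rewrite -!(last_map snd) e2 e1.
  rewrite (last_img' a c); last by rewrite -(size_map snd p) e2 size_map.
  rewrite E2 dsrc_drev /= HL /=; split => //.
- split; first by rewrite -h1 -e1; case: a {e1 h1 h2 h3}.
  by rewrite HF.
Qed.

End M.

Theorem mainTheorem6 (V E : finType) (o t : E -> V) (part : V -> bool)
    (fV : V -> V) (fE : E -> seq (E * bool)) :
  bipartite o t part ->
  graph_map o t fV fE ->
  (forall v, part (fV v) = part v) ->
  traintrack_map (split_o o) (split_t t) fV (split_mapE fE).
Proof.
move=> hb hg hpt.
have Hgm : graph_map (split_o o) (split_t t) fV (split_mapE fE).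
  move=> x; apply: path_split.
  rewrite split_mapE_eq map_proj_img; [exact: hg | exact: (key hb hg hpt)].
have Ht : taut (split_mapE fE).
  move=> x; rewrite split_mapE_eq.
  apply: (img_turns (R:=Rl)); last exact: phi_turns.
  move=> e1 e2 d1 d2 H [_ hl _]; move: H; rewrite /Rl /= hl.
  by rewrite (negbTE (TT_irr _)).
split => //.
exists (fun d1 d2 => dsrc (split_o o) (split_t t) d1 = dsrc (split_o o) (split_t t) d2 /\ TT d1.1.2 d2.1.2).
split.
- split.
  + by move=> d1 d2 [].
  + by move=> d1 d2 [h1 h2]; split; [| rewrite TT_sym].
  + by move=> d [_ h]; rewrite (negbTE (TT_irr _)) in h.
- move=> d1 d2 hs [_ hT].
  have [A1 B1] := Dmap_split hb hg hpt d1; have [A2 B2] := Dmap_split hb hg hpt d2.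
  split; first by rewrite A1 A2 hs.
  rewrite B1 B2.
  have : part (dsrc o t (proj d1)) = part (dsrc o t (proj d2)) := congr1 part hs.
  rewrite !(part_dsrc hb) /= => <-.
  by case: d1.2; [exact: TT_last | exact: TT_first].
- move=> x; split; first exact: Ht.
  apply: (all_turns_and (P := fun a b => dsrc (split_o o) (split_t t) a = dsrc (split_o o) (split_t t) b)
                        (Q := fun a b => TT a.1.2 b.1.2)).
  + by move=> a b h1 h2; split.
  + apply: chain_turns; have := Hgm x.
    by case: (split_mapE fE x) => [//|d s] [_ [_ h]].
  + rewrite split_mapE_eq; apply: (img_turns (R:=Rl)); last exact: phi_turns.
    by [].
Qed.
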